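(* Let $Z$ be a real Banach space and $f:Z\to\mathbb{R}$ a continuous convex function. For $z\in Z$ and $\xi\in\partial f(z)$ define $$Y(f,z,\xi)=\{v\in Z: f(z+tv)-f(z)-\langle\xi,tv\rangle=0 \text{ for all } t\in\mathbb{R}\}.$$ Then for all $z_1,z_2\in Z$, $\xi_1\in\partial f(z_1)$, $\xi_2\in\partial f(z_2)$: (1) $Y(f,z_1,\xi_1)$ is a closed linear subspace of $Z$; (2) $Y(f,z_1,\xi_1)=Y(f,z_2,\xi_2)$; (3) $f(z_1+v)=f(z_1)+\langle\xi_1,v\rangle$ for all $v\in Y(f,z_1,\xi_1)$; (4) $\langle\xi_2-\xi_1,v\rangle=0$ for all $v\in Y(f,z_1,\xi_1)$.
   Context: $\partial f(x)=\{\xi\in Z^*: f(y)\ge f(x)+\langle\xi,y-x\rangle \text{ for all } y\in Z\}$. *)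

(* Defs.v *)
From Stdlib Require Import Reals.
Open Scope R_scope.

Record BanachSpace := {
  carrier :> Type;
  vzero : carrier;
  vadd : carrier -> carrier -> carrier;
  vopp : carrier -> carrier;
  vscal : R -> carrier -> carrier;
  vnorm : carrier -> R;
  vadd_assoc : forall x y z, vadd x (vadd y z) = vadd (vadd x y) z;
  vadd_comm : forall x y, vadd x y = vadd y x;
  vadd_0 : forall x, vadd x vzero = x;
  vadd_opp : forall x, vadd x (vopp x) = vzero;
  vscal_1 : forall x, vscal 1 x = x;
  vscal_assoc : forall a b x, vscal a (vscal b x) = vscal (a * b) x;
  vscal_distr_v : forall a x y, vscal a (vadd x y) = vadd (vscal a x) (vscal a y);
  vscal_distr_s : forall a b x, vscal (a + b) x = vadd (vscal a x) (vscal b x);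
  vnorm_ge0 : forall x, 0 <= vnorm x;
  vnorm_eq0 : forall x, vnorm x = 0 -> x = vzero;
  vnorm_scal : forall a x, vnorm (vscal a x) = Rabs a * vnorm x;
  vnorm_triangle : forall x y, vnorm (vadd x y) <= vnorm x + vnorm y;
  vcomplete : forall u : nat -> carrier,
    (forall eps, 0 < eps -> exists N, forall m n, (N <= m)%nat -> (N <= n)%nat ->
        vnorm (vadd (u m) (vopp (u n))) < eps) ->
    exists l, forall eps, 0 < eps -> exists N, forall n, (N <= n)%nat ->
        vnorm (vadd (u n) (vopp l)) < eps
}.

Arguments vzero {b} : rename.
Arguments vadd {b} _ _ : rename.
Arguments vopp {b} _ : rename.
Arguments vscal {b} _ _ : rename.
Arguments vnorm {b} _ : rename.

Section Defs.
Variable Z : BanachSpace.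

Definition vsub (x y : Z) : Z := vadd x (vopp y).

Definition vconverges (u : nat -> Z) (l : Z) : Prop :=
  forall eps, 0 < eps -> exists N, forall n, (N <= n)%nat -> vnorm (vsub (u n) l) < eps.

Definition continuous_fun (f : Z -> R) : Prop :=
  forall x eps, 0 < eps -> exists delta, 0 < delta /\
    forall y, vnorm (vsub y x) < delta -> Rabs (f y - f x) < eps.

Definition convex_fun (f : Z -> R) : Prop :=
  forall x y t, 0 <= t <= 1 ->
    f (vadd (vscal t x) (vscal (1 - t) y)) <= t * f x + (1 - t) * f y.

Definition in_dual (xi : Z -> R) : Prop :=
  (forall x y, xi (vadd x y) = xi x + xi y) /\
  (forall a x, xi (vscal a x) = a * xi x) /\
  (exists C, forall x, Rabs (xi x) <= C * vnorm x).

Definition subdiff (f : Z -> R) (x : Z) (xi : Z -> R) : Prop :=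
  in_dual xi /\ forall y, f y >= f x + xi (vsub y x).

Definition Yset (f : Z -> R) (z : Z) (xi : Z -> R) (v : Z) : Prop :=
  forall t : R, f (vadd z (vscal t v)) - f z - xi (vscal t v) = 0.

Definition linear_subspace (S : Z -> Prop) : Prop :=
  S vzero /\ (forall x y, S x -> S y -> S (vadd x y)) /\
  (forall a x, S x -> S (vscal a x)).

Definition vclosed_set (S : Z -> Prop) : Prop :=
  forall (u : nat -> Z) l, (forall n, S (u n)) -> vconverges u l -> S l.

End Defs.

Arguments vsub {Z} _ _.
Arguments vconverges {Z} _ _.

(* Main.v *)
Require Import Defs.
From Stdlib Require Import Reals Lra.
Open Scope R_scope.

Lemma add0l {Z : BanachSpace} (x : Z) : vadd vzero x = x.
Proof. rewrite vadd_comm; apply vadd_0. Qed.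

Lemma addKl {Z : BanachSpace} (x y : Z) : vadd (vopp x) (vadd x y) = y.
Proof. rewrite vadd_assoc, (vadd_comm _ (vopp x) x), vadd_opp; apply add0l. Qed.

Lemma add_cancel {Z : BanachSpace} (x y z : Z) : vadd x y = vadd x z -> y = z.
Proof. intro H. rewrite <- (addKl x y), <- (addKl x z), H. reflexivity. Qed.

Lemma scal0 {Z : BanachSpace} (x : Z) : vscal 0 x = vzero.
Proof.
  assert (H : vadd (vscal 0 x) (vscal 0 x) = vadd (vscal 0 x) vzero).
  { rewrite <- vscal_distr_s, Rplus_0_r, vadd_0. reflexivity. }
  exact (add_cancel _ _ _ H).
Qed.

Lemma scal_zero {Z : BanachSpace} (a : R) : vscal a (@vzero Z) = vzero.
Proof. rewrite <- (scal0 (@vzero Z)) at 1. rewrite vscal_assoc, Rmult_0_r. apply scal0. Qed.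

Lemma opp_unique {Z : BanachSpace} (x y : Z) : vadd x y = vzero -> y = vopp x.
Proof. intro H. rewrite <- (addKl x y), H. apply vadd_0. Qed.

Lemma scalN1 {Z : BanachSpace} (x : Z) : vscal (-1) x = vopp x.
Proof. apply opp_unique. rewrite <- (vscal_1 _ x) at 1. rewrite <- vscal_distr_s.
  replace (1 + -1) with 0 by ring. apply scal0. Qed.

Lemma scal_opp {Z : BanachSpace} a (x : Z) : vscal a (vopp x) = vopp (vscal a x).
Proof. apply opp_unique. rewrite <- vscal_distr_v, vadd_opp. apply scal_zero. Qed.

Lemma opp_add {Z : BanachSpace} (x y : Z) : vopp (vadd x y) = vadd (vopp x) (vopp y).
Proof. rewrite <- !scalN1. apply vscal_distr_v. Qed.

Lemma sub_addl {Z : BanachSpace} (w x : Z) : vsub (vadd w x) w = x.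
Proof. unfold vsub. rewrite vadd_comm. apply addKl. Qed.

Lemma swap4 {Z : BanachSpace} (a b c d : Z) :
  vadd (vadd a b) (vadd c d) = vadd (vadd a c) (vadd b d).
Proof.
  rewrite <- !vadd_assoc. f_equal. rewrite !vadd_assoc. f_equal. apply vadd_comm.
Qed.

Lemma cancel3 {Z : BanachSpace} (A B W : Z) :
  vadd (vadd A B) (vadd W (vopp A)) = vadd W B.
Proof.
  rewrite swap4, (vadd_comm _ A W), <- vadd_assoc, (vadd_comm _ B (vopp A)),
    (vadd_assoc _ A (vopp A) B), vadd_opp, add0l. reflexivity.
Qed.

Lemma sub_shift {Z : BanachSpace} (z X Y : Z) :
  vsub (vadd z X) (vadd z Y) = vsub X Y.
Proof. unfold vsub. rewrite opp_add, swap4, vadd_opp. apply add0l. Qed.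

Lemma xi0 {Z : BanachSpace} (xi : Z -> R) : in_dual Z xi -> xi vzero = 0.
Proof. intros [_ [H _]]. rewrite <- (scal0 vzero), H. ring. Qed.

Lemma xiopp {Z : BanachSpace} (xi : Z -> R) x : in_dual Z xi -> xi (vopp x) = - xi x.
Proof. intros [_ [H _]]. rewrite <- scalN1, H. ring. Qed.

Lemma xisub {Z : BanachSpace} (xi : Z -> R) x y : in_dual Z xi -> xi (vsub x y) = xi x - xi y.
Proof. intros Hd. unfold vsub. destruct Hd as [Ha Hs]. rewrite Ha, xiopp by (split; auto). ring. Qed.

Lemma Ychar {Z : BanachSpace} (f : Z -> R) z xi v : subdiff Z f z xi ->
  (Yset Z f z xi v <-> forall t, f (vadd z (vscal t v)) <= f z + t * xi v).
Proof.
  intros [Hd Hs]. pose proof Hd as [Ha [Hsc Hb]]. split.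
  - intros H t. specialize (H t). rewrite Hsc in H. lra.
  - intros H t. specialize (H t). specialize (Hs (vadd z (vscal t v))).
    rewrite sub_addl, Hsc in Hs. rewrite Hsc. lra.
Qed.

Lemma line_bound {Z : BanachSpace} (f : Z -> R) z1 xi1 v :
  continuous_fun Z f -> convex_fun Z f -> subdiff Z f z1 xi1 -> Yset Z f z1 xi1 v ->
  forall w t, f (vadd w (vscal t v)) <= f w + t * xi1 v.
Proof.
  intros hcont hconv [Hd Hs] HY w t.
  pose proof Hd as [Ha [Hsc Hb]].
  destruct (Rle_or_lt (f (vadd w (vscal t v))) (f w + t * xi1 v)) as [Hle|Hlt]; [exact Hle|].
  exfalso.
  set (eps := f (vadd w (vscal t v)) - f w - t * xi1 v).
  assert (Heps : 0 < eps) by (unfold eps; lra).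
  destruct (hcont w (eps/3)) as [delta [Hdel Hc]]; [lra|].
  set (d := vnorm (vsub w z1)).
  assert (Hd0 : 0 <= d) by apply vnorm_ge0.
  set (A := 3 * (Rabs (f z1) + Rabs (f w) + eps) / eps).
  set (B := 2 * d / delta).
  assert (HA : 0 <= A) by (unfold A; apply Rmult_le_pos; [pose proof (Rabs_pos (f z1)); pose proof (Rabs_pos (f w)); lra | left; apply Rinv_0_lt_compat; lra]).
  assert (HB : 0 <= B) by (unfold B; apply Rmult_le_pos; [lra | left; apply Rinv_0_lt_compat; lra]).
  set (lam := / (2 + A + B)).
  assert (Hlam0 : 0 < lam) by (unfold lam; apply Rinv_0_lt_compat; lra).
  assert (Hlam1 : lam * (2 + A + B) = 1) by (unfold lam; field; lra).
  assert (Hlamh : lam <= /2).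
  { unfold lam. apply Rinv_le_contravar; lra. }
  assert (HlamA : lam * (Rabs (f z1) + Rabs (f w) + eps) < eps / 3).
  { assert (E : A * eps = 3 * (Rabs (f z1) + Rabs (f w) + eps)) by (unfold A; field; lra).
    assert (lam * A < 1) by nra.
    assert (E3 : lam * (Rabs (f z1) + Rabs (f w) + eps) * 3 = (lam * A) * eps) by (rewrite (Rmult_assoc lam A eps), E; ring).
    nra. }
  assert (HlamB : 2 * lam * d < delta).
  { assert (E : B * delta = 2 * d) by (unfold B; field; lra).
    assert (lam * B < 1) by nra.
    assert (E3 : 2 * lam * d = (lam * B) * delta) by (rewrite (Rmult_assoc lam B delta), E; ring).
    nra. }
  set (c := lam / (1 - lam)).
  set (x := vadd z1 (vscal (t / lam) v)).
  set (y := vadd w (vscal c (vsub w z1))).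
  assert (Hy : Rabs (f y - f w) < eps / 3).
  { apply Hc. unfold y. rewrite sub_addl, vnorm_scal. fold d.
    unfold c. rewrite Rabs_pos_eq.
    - apply Rle_lt_trans with (2 * lam * d); [|exact HlamB].
      apply Rmult_le_compat_r; [exact Hd0|].
      apply Rmult_le_reg_r with (1 - lam); [lra|]. unfold Rdiv.
      rewrite Rmult_assoc, Rinv_l by lra. nra.
    - apply Rmult_le_pos; [lra|]. left; apply Rinv_0_lt_compat; lra. }
  assert (Hx : f x = f z1 + (t / lam) * xi1 v).
  { specialize (HY (t / lam)). unfold x. rewrite Hsc in HY. lra. }
  assert (Hcomb : vadd (vscal lam x) (vscal (1 - lam) y) = vadd w (vscal t v)).
  { unfold x, y, vsub. rewrite !vscal_distr_v, !vscal_assoc, scal_opp.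
    replace (lam * (t / lam)) with t by (field; lra).
    replace ((1 - lam) * c) with lam by (unfold c; field; lra).
    rewrite (vadd_assoc _ (vscal (1 - lam) w)), <- vscal_distr_s.
    replace (1 - lam + lam) with 1 by ring. rewrite vscal_1. apply cancel3. }
  pose proof (hconv x y lam) as Hcv. rewrite Hcomb in Hcv.
  assert (Hcv' : f (vadd w (vscal t v)) <= lam * f x + (1 - lam) * f y) by (apply Hcv; lra).
  rewrite Hx in Hcv'.
  assert (E2 : lam * (f z1 + t / lam * xi1 v) = lam * f z1 + t * xi1 v) by (field; lra).
  rewrite E2 in Hcv'.
  pose proof (Rabs_def2 _ _ Hy) as [Hy1 Hy2].
  pose proof (Rle_abs (f z1)). pose proof (Rle_abs (- f w)). rewrite Rabs_Ropp in *.
  assert (lam * (f z1 - f y) <= lam * (Rabs (f z1) + Rabs (f w) + eps)).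
  { apply Rmult_le_compat_l; lra. }
  unfold eps in *. nra.
Qed.

Lemma Y_incl {Z : BanachSpace} (f : Z -> R) z1 z2 xi1 xi2 v :
  continuous_fun Z f -> convex_fun Z f -> subdiff Z f z1 xi1 -> subdiff Z f z2 xi2 ->
  Yset Z f z1 xi1 v -> xi2 v = xi1 v /\ Yset Z f z2 xi2 v.
Proof.
  intros hcont hconv H1 H2 HY.
  pose proof (line_bound f z1 xi1 v hcont hconv H1 HY z2) as LB.
  pose proof H2 as [[Ha [Hsc Hb]] Hs].
  assert (G : forall t, f (vadd z2 (vscal t v)) >= f z2 + t * xi2 v).
  { intro t. specialize (Hs (vadd z2 (vscal t v))). rewrite sub_addl, Hsc in Hs. exact Hs. }
  assert (E : xi2 v = xi1 v).
  { pose proof (G 1). pose proof (G (-1)). pose proof (LB 1). pose proof (LB (-1)). lra. }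
  split; [exact E|]. apply (proj2 (Ychar f z2 xi2 v H2)). intro t. rewrite E. apply LB.
Qed.

Lemma Y_subspace {Z : BanachSpace} (f : Z -> R) z xi :
  convex_fun Z f -> subdiff Z f z xi -> linear_subspace Z (Yset Z f z xi).
Proof.
  intros hconv H. pose proof H as [[Ha [Hsc Hb]] Hs]. split; [|split].
  - intro t. rewrite scal_zero, vadd_0, xi0 by (split; auto). ring.
  - intros v w Hv Hw. apply (proj2 (Ychar f z xi _ H)). intro t.
    pose proof (proj1 (Ychar f z xi _ H) Hv (2 * t)) as Hv'.
    pose proof (proj1 (Ychar f z xi _ H) Hw (2 * t)) as Hw'.
    assert (Hcomb : vadd (vscal (1/2) (vadd z (vscal (2 * t) v)))
                         (vscal (1 - 1/2) (vadd z (vscal (2 * t) w))) = vadd z (vscal t (vadd v w))).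
    { replace (1 - 1/2) with (1/2) by field. rewrite !vscal_distr_v, !vscal_assoc.
      replace (1/2 * (2 * t)) with t by field. rewrite swap4, <- vscal_distr_s.
      replace (1/2 + 1/2) with 1 by field. rewrite vscal_1. reflexivity. }
    pose proof (hconv (vadd z (vscal (2 * t) v)) (vadd z (vscal (2 * t) w)) (1/2)) as Hc.
    rewrite Hcomb in Hc. rewrite Ha. assert (0 <= 1/2 <= 1) by lra. specialize (Hc H0). lra.
  - intros a v Hv t. rewrite vscal_assoc. apply Hv.
Qed.

Lemma vsub_scal {Z : BanachSpace} t (a b : Z) : vsub (vscal t a) (vscal t b) = vscal t (vsub a b).
Proof. unfold vsub. rewrite vscal_distr_v, scal_opp. reflexivity. Qed.

Lemma Y_closed {Z : BanachSpace} (f : Z -> R) z xi :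
  continuous_fun Z f -> subdiff Z f z xi -> vclosed_set Z (Yset Z f z xi).
Proof.
  intros hcont H u l Hu Hconv. pose proof H as [[Ha [Hsc [C HC]]] Hs].
  apply (proj2 (Ychar f z xi _ H)). intro t.
  destruct (Rle_or_lt (f (vadd z (vscal t l))) (f z + t * xi l)) as [Hle|Hlt]; [exact Hle|].
  exfalso.
  set (eps := f (vadd z (vscal t l)) - f z - t * xi l).
  assert (Heps : 0 < eps) by (unfold eps; lra).
  destruct (hcont (vadd z (vscal t l)) (eps/3)) as [delta [Hdel Hc]]; [lra|].
  set (K := Rabs C + 1).
  assert (HK : 1 <= K) by (unfold K; pose proof (Rabs_pos C); lra).
  set (m := Rmin delta (eps/3)).
  assert (Hm : 0 < m) by (unfold m; apply Rmin_glb_lt; lra).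
  assert (Hm1 : m <= delta) by apply Rmin_l.
  assert (Hm2 : m <= eps/3) by apply Rmin_r.
  pose proof (Rabs_pos t) as Ht0.
  set (eta := m / (K * (Rabs t + 1))).
  assert (Heta : 0 < eta) by (unfold eta; apply Rdiv_lt_0_compat; nra).
  destruct (Hconv eta Heta) as [N HN]. specialize (HN N (le_n N)).
  set (r := vnorm (vsub (u N) l)) in *.
  assert (Hr0 : 0 <= r) by apply vnorm_ge0.
  assert (Hr : K * (Rabs t + 1) * r < m).
  { assert (E : eta * (K * (Rabs t + 1)) = m) by (unfold eta; field; nra). nra. }
  assert (Hf : Rabs (f (vadd z (vscal t (u N))) - f (vadd z (vscal t l))) < eps / 3).
  { apply Hc. rewrite sub_shift, vsub_scal, vnorm_scal. fold r. nra. }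
  assert (Hxi : Rabs (xi (vsub (u N) l)) <= K * r).
  { apply Rle_trans with (C * r); [apply HC|]. apply Rmult_le_compat_r; [exact Hr0|].
    unfold K; pose proof (Rle_abs C); lra. }
  rewrite xisub in Hxi by exact (proj1 H).
  pose proof (proj1 (Ychar f z xi _ H) (Hu N) t) as HuN.
  pose proof (Rabs_def2 _ _ Hf) as [Hf1 Hf2].
  assert (Htx : Rabs (t * xi (u N) - t * xi l) <= Rabs t * (K * r)).
  { replace (t * xi (u N) - t * xi l) with (t * (xi (u N) - xi l)) by ring.
    rewrite Rabs_mult. apply Rmult_le_compat_l; auto. }
  pose proof (Rle_abs (t * xi (u N) - t * xi l)).
  assert (Rabs t * (K * r) < eps / 3) by nra.
  unfold eps in *. lra.
Qed.

Theorem mainTheorem4 (Z : BanachSpace) (f : Z -> R)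
  (hcont : continuous_fun Z f) (hconv : convex_fun Z f) :
  forall (z1 z2 : Z) (xi1 xi2 : Z -> R),
    subdiff Z f z1 xi1 -> subdiff Z f z2 xi2 ->
    (linear_subspace Z (Yset Z f z1 xi1) /\ vclosed_set Z (Yset Z f z1 xi1)) /\
    (forall v, Yset Z f z1 xi1 v <-> Yset Z f z2 xi2 v) /\
    (forall v, Yset Z f z1 xi1 v -> f (vadd z1 v) = f z1 + xi1 v) /\
    (forall v, Yset Z f z1 xi1 v -> xi2 v - xi1 v = 0).
Proof.
  intros z1 z2 xi1 xi2 H1 H2. split; [split|split; [|split]].
  - apply Y_subspace; assumption.
  - apply Y_closed; assumption.
  - intro v. split; intro HY.
    + exact (proj2 (Y_incl f z1 z2 xi1 xi2 v hcont hconv H1 H2 HY)).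
    + exact (proj2 (Y_incl f z2 z1 xi2 xi1 v hcont hconv H2 H1 HY)).
  - intros v HY. specialize (HY 1). rewrite vscal_1 in HY. lra.
  - intros v HY. pose proof (proj1 (Y_incl f z1 z2 xi1 xi2 v hcont hconv H1 H2 HY)). lra.
Qed.
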